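(* Let $S$ be either $\mathcal{PI}^{\ast}_X$ or $\overline{\mathcal{PI}^{\ast}}_X$ and let $a,b\in S$. Then: (1) $a\mathcal{R}b$ iff $\mathrm{dom}(a)=\mathrm{dom}(b)$; (2) $a\mathcal{L}b$ iff $\mathrm{ran}(a)=\mathrm{ran}(b)$; (3) $a\mathcal{D}b$ iff $a\mathcal{J}b$ iff $\mathrm{rank}(a)=\mathrm{rank}(b)$; (4) every ideal of $S$ has the form $J_\xi=\{\alpha\in S:\mathrm{rank}(\alpha)<\xi\}$ for some cardinal $\xi\le |X|^{+}$, where $|X|^{+}$ is the successor cardinal of $|X|$.
   Context: Let $X$ be a set and $X'=\{x':x\in X\}$ a disjoint copy of $X$. Let $P_X$ be the set of all partitions of $X\cup X'$ each of whose blocks is either a singleton (a point) or a generalised line, i.e. a subset meeting both $X$ and $X'$. Write $\alpha=\{A_i\cup B_i'\}_{i\in I}$ for the element whose generalised lines are the $A_i\cup B_i'$ ($A_i,B_i\subseteq X$ nonempty, the $A_i$ pairwise disjoint, the $B_i$ pairwise disjoint), all other elements being points. Set $\mathrm{rank}(\alpha)=|I|$, $\mathrm{dom}(\alpha)$ = the partition $\{A_i\}_{i\in I}$ of $\bigcup_i A_i$, and $\mathrm{ran}(\alpha)$ = the partition $\{B_i'\}_{i\in I}$ of $\bigcup_i B_i'$. Product $\star$: with $X''$ a third copy of $X$, regard $\alpha$ as a partition of $X\cup X''$ and $\beta$ as a partition of $X''\cup X'$ (identifying the bottom copy of $\alpha$ with the top copy of $\beta$ via $X''$), let $\sim$ be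 the equivalence relation on $X\cup X''\cup X'$ generated by the blocks of both; $\alpha\star\beta$ is the partition of $X\cup X'$ in which distinct $u,v$ are in one block iff $u\sim v$ and the $\sim$-class of $u$ contains no singleton block of $\alpha$ or of $\beta$. Product $\circ$: $\alpha\circ\beta$ has as generalised lines exactly the sets $A\cup D'$ with $A\cup B'$ a generalised line of $\alpha$ and $B\cup D'$ a generalised line of $\beta$ (same $B$), all other elements being points. $\mathcal{PI}^{\ast}_X=(P_X,\star)$, $\overline{\mathcal{PI}^{\ast}}_X=(P_X,\circ)$; $\mathcal{R},\mathcal{L},\mathcal{D},\mathcal{J}$ are Green's relations. *)

(* Defs.v *)
From HB Require Import structures.
From mathcomp Require Import all_boot.
From mathcomp Require Import boolp classical_sets cardinality.
From Stdlib Require Import Relations.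

Set Implicit Arguments.
Unset Strict Implicit.
Unset Printing Implicit Defensive.

Local Open Scope classical_set_scope.
Local Open Scope card_scope.

Section PartitionMonoids.
Variable X : Type.

(* X ∪ X' is modelled as X + X : inl x = x (top copy), inr x = x' (primed copy). *)
Definition pt := (X + X)%type.
Definition partition := set (set pt).

Definition top (B : set pt) : set X := [set x | B (inl x)].
Definition bot (B : set pt) : set X := [set x | B (inr x)].

Definition is_point (B : set pt) := exists p, B = [set p].
Definition is_line (B : set pt) := top B !=set0 /\ bot B !=set0.

Definition is_partition (P : partition) :=
  [/\ (forall B, P B -> B !=set0),
      (forall p, exists B, P B /\ B p) &
      (forall B C p, P B -> P C -> B p -> C p -> B = C)].

Definition PX (P : partition) :=
  is_partition P /\ (forall B, P B -> is_point B \/ is_line B).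

Definition lines (a : partition) : set (set pt) := [set L | a L /\ is_line L].
(* dom(a) = {A_i}, ran(a) = {B_i} (the B_i' read back in X) *)
Definition pdom (a : partition) : set (set X) := [set A | exists L, lines a L /\ A = top L].
Definition pran (a : partition) : set (set X) := [set B | exists L, lines a L /\ B = bot L].
(* rank(a) is the cardinality of lines a; rank comparisons are card_le / card_eq *)

Inductive lvl := Top | Mid | Bot.
Definition pt3 := (X * lvl)%type.
(* a is read as a partition of X ∪ X'', b as a partition of X'' ∪ X' *)
Definition embA (p : pt) : pt3 := match p with inl x => (x, Top) | inr x => (x, Mid) end.
Definition embB (p : pt) : pt3 := match p with inl x => (x, Mid) | inr x => (x, Bot) end.
Definition outP (p : pt) : pt3 := match p with inl x => (x, Top) | inr x => (x, Bot) end.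

Definition gen_rel (a b : partition) : relation pt3 := fun u v =>
  (exists B, a B /\ exists p q, B p /\ B q /\ u = embA p /\ v = embA q) \/
  (exists B, b B /\ exists p q, B p /\ B q /\ u = embB p /\ v = embB q).

Definition sim (a b : partition) : relation pt3 := clos_refl_sym_trans pt3 (gen_rel a b).

Definition class_has_point (a b : partition) (u : pt3) :=
  exists w, sim a b u w /\
    ((exists p, a [set p] /\ w = embA p) \/ (exists p, b [set p] /\ w = embB p)).

Definition star_rel (a b : partition) (u v : pt) :=
  u = v \/ (sim a b (outP u) (outP v) /\ ~ class_has_point a b (outP u)).

Definition pstar (a b : partition) : partition :=
  [set B | exists u, B = [set v | star_rel a b u v]].

Definition mkline (A D : set X) : set pt :=
  [set p | match p with inl x => A x | inr x => D x end].

Definition circ_lines (a b : partition) : set (set pt) :=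
  [set L | exists L1 L2, lines a L1 /\ lines b L2 /\ bot L1 = top L2 /\
                         L = mkline (top L1) (bot L2)].

Definition pcirc (a b : partition) : partition :=
  circ_lines a b `|`
  [set B | exists p, B = [set p] /\ (forall L, circ_lines a b L -> ~ L p)].

(* the two semigroups: c = false gives PI^*_X (product star), c = true its variant (product circ) *)
Definition PIop (c : bool) : partition -> partition -> partition :=
  if c then pcirc else pstar.

End PartitionMonoids.

Section Green.
Variables (T : Type) (S : set T) (op : T -> T -> T).

Definition rprinc (a : T) : set T := [set c | c = a \/ exists x, S x /\ c = op a x].
Definition lprinc (a : T) : set T := [set c | c = a \/ exists x, S x /\ c = op x a].
Definition jprinc (a : T) : set T :=
  [set c | c = a \/ (exists x, S x /\ c = op a x) \/ (exists x, S x /\ c = op x a) \/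
           exists x y, S x /\ S y /\ c = op (op x a) y].

Definition GreenR (a b : T) := rprinc a = rprinc b.
Definition GreenL (a b : T) := lprinc a = lprinc b.
Definition GreenJ (a b : T) := jprinc a = jprinc b.
Definition GreenD (a b : T) := exists c, S c /\ GreenR a c /\ GreenL c b.

(* two-sided ideal (the empty set is allowed; it is J_0) *)
Definition is_ideal (I : set T) :=
  I `<=` S /\ (forall a x, I a -> S x -> I (op a x) /\ I (op x a)).
End Green.

(* a cardinal |K| is below the successor cardinal |X|^+ iff every strictly
   smaller cardinal (realised by a subset of K) is at most |X| *)
Definition card_le_succ (T X : Type) (K : set T) :=
  forall A, A `<=` K -> (A #<= K) -> ~~ (K #<= A) -> A #<= [set: X].

Definition rank_lt (X T : Type) (a : partition X) (K : set T) :=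
  (lines a #<= K) && ~~ (K #<= lines a).

(* Main.v *)
Require Import Defs.
From mathcomp Require Import all_boot.
From mathcomp Require Import boolp classical_sets cardinality functions.
From Stdlib Require Import Relations.

Set Implicit Arguments.
Unset Strict Implicit.
Unset Printing Implicit Defensive.
Local Open Scope classical_set_scope.
Local Open Scope card_scope.

Lemma le_of_inj T U (A : set T) (B : set U) (f : T -> U) :
  (forall x, A x -> B (f x)) -> {in A &, injective f} -> A #<= B.
Proof.
move=> fAB finj; apply: (@card_le_trans _ _ _ (f @` A)).
  by rewrite (card_le_eqr (inj_card_eq finj)).
by apply: subset_card_le => _ [x Ax <-]; apply: fAB.
Qed.

Lemma inj_of_le T U (A : set T) (B : set U) (u0 : U) : A #<= B ->
  exists f : T -> U, (forall x, A x -> B (f x)) /\ {in A &, injective f}.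
Proof.
move=> /card_leP [g].
exists (fun x => match pselect (A x) with left h => val (g (SigSub (mem_set h))) | right _ => u0 end).
split.
  move=> x Ax; case: pselect => // h; exact: set_valP.
move=> x y; rewrite !inE => Ax Ay; case: pselect => // hx; case: pselect => // hy.
move/val_inj => /(@inj _ _ _ g) e.
have := e (in_setT _) (in_setT _).
by move=> /(congr1 val).
Qed.

Lemma card_min (U : Type) (F : set (set U)) : F !=set0 ->
  exists K, F K /\ forall A, F A -> K #<= A.
Proof.
move=> [A1 FA1].
pose P (R : set (set U -> U)) :=
  (forall h, R h -> forall A, F A -> A (h A)) /\
  (forall h h', R h -> R h' -> forall A, F A -> h A = h' A -> h = h').
have [R0 [[PR1 PR2] maxR]] : exists R, P R /\ forall B, R `<` B -> ~ P B.
  apply: (@Zorn_bigcup _ P) => G GP tot; split.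
    by move=> h [X GX Xh] A FA; have [P1 _] := GP X GX; exact: P1 h Xh A FA.
  move=> h h' [X1 G1 h1] [X2 G2 h2] A FA e.
  have [s|s] := tot _ _ G1 G2.
    by have [_ P2] := GP X2 G2; apply: P2 (s _ h1) h2 A FA e.
  by have [_ P2] := GP X1 G1; apply: P2 h1 (s _ h2) A FA e.
have [[A0 [FA0 A0cov]]|nocov] := pselect (exists A0, F A0 /\
   forall x, A0 x -> exists h, R0 h /\ h A0 = x).
  exists A0; split => // A FA.
  have [g Hg] : exists g : U -> set U -> U, forall x, A0 x -> R0 (g x) /\ g x A0 = x.
    have [g Hg] := choice (P := fun x (h : set U -> U) => A0 x -> R0 h /\ h A0 = x) (fun x =>
      match pselect (A0 x) with
      | left hx => let: ex_intro h Hh := A0cov x hx in ex_intro _ h (fun _ => Hh)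
      | right hx => ex_intro _ (fun _ => x) (fun H => False_ind _ (hx H)) end).
    by exists g.
  apply: (@le_of_inj _ _ _ _ (fun x => g x A)).
    by move=> x /Hg [Rg _]; exact: PR1 _ Rg A FA.
  move=> x y; rewrite !inE => Ax Ay e.
  have [Rx gx] := Hg x Ax; have [Ry gy] := Hg y Ay.
  by rewrite -gx -gy (PR2 _ _ Rx Ry A FA e).
exfalso.
have H : forall A, exists y, F A -> A y /\ forall h, R0 h -> h A <> y.
  move=> A; have [FA|nFA] := pselect (F A); last first.
    have [x _] : exists x, A1 x /\ forall h, R0 h -> h A1 <> x.
      apply: contra_notP (nocov) => nx; exists A1; split => // x A1x.
      apply: contra_notP nx => nh; exists x; split => // h Rh e; apply: nh; by exists h.
    by exists x.
  have [x [Ax Hx]] : exists x, A x /\ forall h, R0 h -> h A <> x.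
    apply: contra_notP (nocov) => nx; exists A; split => // x A1x.
    apply: contra_notP nx => nh; exists x; split => // h Rh e; apply: nh; by exists h.
  by exists x.
have [h0 Hh0] := choice H.
apply: (maxR (R0 `|` [set h0])).
  split; first by move=> h Rh; left.
  move=> /(_ h0 (or_intror erefl)) R0h0.
  by have [_ /(_ h0 R0h0)] := Hh0 A1 FA1.
split.
  by move=> h [Rh|->] A FA; [exact: PR1 h Rh A FA|exact: (Hh0 A FA).1].
move=> h h' [Rh|->] [Rh'|->] A FA e //.
- exact: PR2 Rh Rh' A FA e.
- by have [_ /(_ h Rh)] := Hh0 A FA.
- by have [_ /(_ h' Rh')] := Hh0 A FA; rewrite e.
Qed.

Lemma card_total T U (A : set T) (B : set U) : A #<= B \/ B #<= A.
Proof.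
have [K [FK Kmin]] := @card_min (T + U)%type [set inl @` A; inr @` B] (ex_intro _ (inl @` A) (or_introl erefl)).
have eA : (@inl T U) @` A #= A.
  by apply: (@inj_card_eq T (T+U)%type A (@inl T U)) => x y _ _ [].

have eB : (@inr T U) @` B #= B.
  by apply: (@inj_card_eq U (T+U)%type B (@inr T U)) => x y _ _ [].

case: FK => EK; rewrite EK in Kmin.
  left; have := Kmin _ (or_intror erefl).
  by rewrite (card_le_eql eA) (card_le_eqr eB).
right; have := Kmin _ (or_introl erefl).
by rewrite (card_le_eql eB) (card_le_eqr eA).
Qed.
Section Basics.
Variable X : Type.
Implicit Types (a b d : Defs.partition X) (B C L M : set (pt X)).

Lemma setP' T (A B : set T) : (forall p, A p <-> B p) -> A = B.
Proof. by move=> H; apply/seteqP; split => p /H. Qed.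

Lemma mkline_top_bot L : mkline (top L) (bot L) = L.
Proof. by apply: setP' => -[x|x]. Qed.

Lemma top_mkline (A D : set X) : top (mkline A D) = A.
Proof. by []. Qed.
Lemma bot_mkline (A D : set X) : bot (mkline A D) = D.
Proof. by []. Qed.

Lemma line_not_point L : is_line L -> ~ is_point L.
Proof.
move=> [[x Lx] [y Ly]] [p Lp]; move: Lx Ly; rewrite /top /bot /= Lp /=.
by move=> <-.
Qed.

Lemma line_not_single L p : is_line L -> L <> [set p].
Proof. by move=> /line_not_point H E; apply: H; exists p. Qed.

Lemma PX_disj a B C p : PX a -> a B -> a C -> B p -> C p -> B = C.
Proof. by move=> [[_ _ H] _]; apply: H. Qed.

Lemma PX_cover a p : PX a -> exists B, a B /\ B p.
Proof. by move=> [[_ H _] _]. Qed.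

Lemma PX_ne a B : PX a -> a B -> B !=set0.
Proof. by move=> [[H _ _] _]; apply: H. Qed.

Lemma PX_pl a B : PX a -> a B -> is_point B \/ is_line B.
Proof. by move=> [_ H]; apply: H. Qed.

Lemma PX_block_line a B p : PX a -> a B -> B p -> ~ a [set p] -> is_line B.
Proof.
move=> Pa aB Bp nap; have [[q Bq]|//] := PX_pl Pa aB.
by exfalso; apply: nap; move: aB; rewrite Bq; move: Bp; rewrite Bq /= => ->.
Qed.

Lemma PX_point_block a B p : PX a -> a B -> B p -> is_point B -> B = [set p].
Proof. by move=> _ _ Bp [q Bq]; move: Bp; rewrite Bq /= => ->. Qed.

Lemma lines_top_inj a L1 L2 z : PX a -> lines a L1 -> lines a L2 ->
  top L1 z -> top L2 z -> L1 = L2.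
Proof. by move=> Pa [a1 _] [a2 _] h1 h2; exact: (PX_disj Pa a1 a2 h1 h2). Qed.

Lemma lines_bot_inj a L1 L2 z : PX a -> lines a L1 -> lines a L2 ->
  bot L1 z -> bot L2 z -> L1 = L2.
Proof. by move=> Pa [a1 _] [a2 _] h1 h2; exact: (PX_disj Pa a1 a2 h1 h2). Qed.

Definition complete (F : set (set (pt X))) : Defs.partition X :=
  F `|` [set B | exists p, B = [set p] /\ (forall L, F L -> ~ L p)].

Definition good_fam (F : set (set (pt X))) :=
  (forall L, F L -> is_line L) /\
  (forall L1 L2 p, F L1 -> F L2 -> L1 p -> L2 p -> L1 = L2).

Lemma complete_PX F : good_fam F -> PX (complete F).
Proof.
move=> [Fl Fd]; split; last first.
  move=> B [/Fl|[p [-> _]]]; [by right|by left; exists p].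
split.
- move=> B [/Fl [[x Lx] _]|[p [-> _]]]; [by exists (inl x)|by exists p].
- move=> p; have [[L [FL Lp]]|nL] := pselect (exists L, F L /\ L p).
    by exists L; split => //; left.
  exists [set p]; split => //; right; exists p; split => // L FL Lp.
  by apply: nL; exists L.
- move=> B C p [FB|[q [-> nq]]] [FC|[r [-> nr]]] Bp Cp.
  + exact: Fd FB FC Bp Cp.
  + by move: Cp nr => /= <- /(_ B FB).
  + by move: Bp nq => /= <- /(_ C FC).
  + by move: Bp Cp => /= <- <-.
Qed.

Lemma lines_complete F : good_fam F -> lines (complete F) = F.
Proof.
move=> [Fl Fd]; apply: setP' => L; split.
  by move=> [[//|[p [-> _]]] /line_not_point]; case; exists p.
by move=> FL; split; [left|apply: Fl].
Qed.

Lemma good_lines a : PX a -> good_fam (lines a).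
Proof.
move=> Pa; split; first by move=> L [].
by move=> L1 L2 p [h1 _] [h2 _] p1 p2; exact: (PX_disj Pa h1 h2 p1 p2).
Qed.

Lemma PX_complete a : PX a -> complete (lines a) = a.
Proof.
move=> Pa; apply: setP' => B; split.
  move=> [[]//|[p [-> nL]]].
  have [C [aC Cp]] := PX_cover p Pa.
  have [pt|ln] := PX_pl Pa aC.
    by rewrite -(PX_point_block Pa aC Cp pt).
  by exfalso; apply: (nL C).
move=> aB; have [pt|ln] := PX_pl Pa aB; last by left.
right; case: pt => p Bp; exists p; split => // L [aL lL] Lp.
have : L = B by apply: PX_disj Pa aL aB Lp _; rewrite Bp.
by move=> E; apply: (line_not_point lL); rewrite E; exists p.
Qed.

Lemma PX_ext a b : PX a -> PX b -> lines a = lines b -> a = b.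
Proof. by move=> Pa Pb E; rewrite -(PX_complete Pa) -(PX_complete Pb) E. Qed.

Lemma line_ex L : is_line L -> (exists x, L (inl x)) /\ (exists y, L (inr y)).
Proof. by case. Qed.

Lemma mkline_line (A D : set X) : A !=set0 -> D !=set0 -> is_line (mkline A D).
Proof. by move=> *; split. Qed.

End Basics.

Section Fam.
Definition pfam T (P : set (set T)) := (forall A, P A -> A !=set0) /\
  (forall A B z, P A -> P B -> A z -> B z -> A = B).
Definition domle T (P Q : set (set T)) :=
  forall A, P A -> forall z, A z -> exists A', Q A' /\ A' z /\ A' `<=` A.
Definition dle T (c : bool) (P Q : set (set T)) := if c then P `<=` Q else domle P Q.

Variable T : Type.
Implicit Types P Q : set (set T).

Lemma domle_refl P : domle P P.
Proof. by move=> A PA z Az; exists A; split=> //; split. Qed.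

Lemma subset_domle P Q : P `<=` Q -> domle P Q.
Proof. by move=> PQ A PA z Az; exists A; split; [exact: PQ|split]. Qed.

Lemma domle_sub P Q : pfam P -> pfam Q -> domle P Q -> domle Q P -> P `<=` Q.
Proof.
move=> [Pn Pd] [Qn Qd] PQ QP A PA; have [z Az] := Pn A PA.
have [A' [QA' [A'z A'A]]] := PQ A PA z Az.
have [A'' [PA'' [A''z A''A']]] := QP A' QA' z A'z.
have E : A'' = A by apply: Pd PA'' PA A''z Az.
suff -> : A = A' by [].
by apply/seteqP; split => // w Aw; apply: A''A'; rewrite E.
Qed.

Lemma domle_antisym P Q : pfam P -> pfam Q -> domle P Q -> domle Q P -> P = Q.
Proof. by move=> fP fQ PQ QP; apply/seteqP; split; apply: domle_sub. Qed.

Lemma domle_card P Q : pfam P -> pfam Q -> domle P Q -> P #<= Q.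
Proof.
move=> [Pn Pd] [Qn Qd] PQ.
have [g Hg] := choice (P := fun A A' => P A -> Q A' /\ A' `<=` A /\ A' !=set0) (fun A =>
  match pselect (P A) with
  | left PA => let: ex_intro z Az := Pn A PA in
     let: ex_intro A' (conj QA' (conj A'z A'A)) := PQ A PA z Az in
     ex_intro _ A' (fun _ => conj QA' (conj A'A (ex_intro _ z A'z)))
  | right nPA => ex_intro _ A (fun h => False_ind _ (nPA h)) end).
apply: (@le_of_inj _ _ _ _ g); first by move=> A /Hg [].
move=> A1 A2; rewrite !inE => P1 P2 e.
have [_ [s1 [z gz]]] := Hg A1 P1; have [_ [s2 _]] := Hg A2 P2.
apply: Pd P1 P2 (s1 z gz) _; apply: s2; rewrite -e; exact: gz.
Qed.

Lemma dle_refl c P : dle c P P.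
Proof. by case: c => //=; exact: domle_refl. Qed.

Lemma subset_dle c P Q : P `<=` Q -> dle c P Q.
Proof. by case: c => //= /subset_domle. Qed.

Lemma dle_antisym c P Q : pfam P -> pfam Q -> dle c P Q -> dle c Q P -> P = Q.
Proof.
case: c => /=; last exact: domle_antisym.
by move=> _ _ PQ QP; apply/seteqP.
Qed.

Lemma dle_card c P Q : pfam P -> pfam Q -> dle c P Q -> P #<= Q.
Proof. by move=> fP fQ; case: c => /= [/subset_domle|]; apply: domle_card. Qed.

Lemma dle_domle c P Q : dle c P Q -> domle P Q.
Proof. by case: c => //= /subset_domle. Qed.
End Fam.

Section Ranks.
Variable X : Type.
Implicit Types (a b d : Defs.partition X).

Lemma pfam_pdom a : PX a -> pfam (pdom a).
Proof.
move=> Pa; split.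
  by move=> A [L [[_ [Ln _]] ->]].
move=> A B z [L1 [l1 ->]] [L2 [l2 ->]] h1 h2.
by rewrite (lines_top_inj Pa l1 l2 h1 h2).
Qed.

Lemma pfam_pran a : PX a -> pfam (pran a).
Proof.
move=> Pa; split.
  by move=> A [L [[_ [_ Ln]] ->]].
move=> A B z [L1 [l1 ->]] [L2 [l2 ->]] h1 h2.
by rewrite (lines_bot_inj Pa l1 l2 h1 h2).
Qed.

Lemma card_lines_dom a : PX a -> lines a #= pdom a.
Proof.
move=> Pa; have -> : pdom a = (@top X) @` lines a.
  by apply: setP' => A; split => [[L [lL ->]]|[L lL <-]]; [exists L|exists L].
rewrite card_eq_sym; apply: inj_card_eq => L1 L2; rewrite !inE => l1 l2 e.
have [[z hz] _] := l1.2.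
by apply: (lines_top_inj Pa l1 l2 hz); rewrite -e.
Qed.

Lemma card_lines_ran a : PX a -> lines a #= pran a.
Proof.
move=> Pa; have -> : pran a = (@bot X) @` lines a.
  by apply: setP' => A; split => [[L [lL ->]]|[L lL <-]]; [exists L|exists L].
rewrite card_eq_sym; apply: inj_card_eq => L1 L2; rewrite !inE => l1 l2 e.
have [_ [z hz]] := l1.2.
by apply: (lines_bot_inj Pa l1 l2 hz); rewrite -e.
Qed.

Lemma dle_lines_dom c a b : PX a -> PX b -> dle c (pdom a) (pdom b) -> lines a #<= lines b.
Proof.
move=> Pa Pb H; rewrite (card_le_eql (card_lines_dom Pa)) (card_le_eqr (card_lines_dom Pb)).
exact: dle_card (pfam_pdom Pa) (pfam_pdom Pb) H.
Qed.

Lemma dle_lines_ran c a b : PX a -> PX b -> dle c (pran a) (pran b) -> lines a #<= lines b.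
Proof.
move=> Pa Pb H; rewrite (card_le_eql (card_lines_ran Pa)) (card_le_eqr (card_lines_ran Pb)).
exact: dle_card (pfam_pran Pa) (pfam_pran Pb) H.
Qed.
End Ranks.

Section Circ.
Variable X : Type.
Implicit Types (a b d : Defs.partition X).

Lemma circ_good a b : PX a -> PX b -> good_fam (circ_lines a b).
Proof.
move=> Pa Pb; split.
  move=> L [L1 [L2 [l1 [l2 [e ->]]]]].
  by apply: mkline_line; [exact: l1.2.1|exact: l2.2.2].
move=> L L' p [L1 [L2 [l1 [l2 [e ->]]]]] [L1' [L2' [l1' [l2' [e' ->]]]]].
case: p => [z|w] /= h h'.
  have E1 := lines_top_inj Pa l1 l1' h h'; subst L1'.
  have [[t ht] _] := l2.2.
  have ht' : top L2' t by rewrite -e' e.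
  by rewrite (lines_top_inj Pb l2 l2' ht ht').
have E2 := lines_bot_inj Pb l2 l2' h h'; subst L2'.
have [_ [t ht]] := l1.2.
have ht' : bot L1' t by rewrite e' -e.
by rewrite (lines_bot_inj Pa l1 l1' ht ht').
Qed.

Lemma pcirc_PX a b : PX a -> PX b -> PX (pcirc a b).
Proof. by move=> Pa Pb; apply: (complete_PX (circ_good Pa Pb)). Qed.

Lemma lines_pcirc a b : PX a -> PX b -> lines (pcirc a b) = circ_lines a b.
Proof. by move=> Pa Pb; apply: (lines_complete (circ_good Pa Pb)). Qed.

Lemma pcirc_dom a b : PX a -> PX b -> pdom (pcirc a b) `<=` pdom a.
Proof.
move=> Pa Pb A [L [lL ->]]; move: lL; rewrite (lines_pcirc Pa Pb).
by move=> [L1 [L2 [l1 [l2 [e ->]]]]]; exists L1.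
Qed.

Lemma pcirc_constr a d : PX a -> PX d -> pdom d `<=` pdom a ->
  exists x, PX x /\ pcirc a x = d.
Proof.
move=> Pa Pd sub.
pose F := [set L | exists L1 M, lines a L1 /\ lines d M /\ top L1 = top M /\
   L = mkline (bot L1) (bot M)].
have gF : good_fam F.
  split.
    move=> L [L1 [M [l1 [lM [e ->]]]]].
    by apply: mkline_line; [exact: l1.2.2|exact: lM.2.2].
  move=> L L' p [L1 [M [l1 [lM [e ->]]]]] [L1' [M' [l1' [lM' [e' ->]]]]].
  case: p => [z|w] /= h h'.
    have E1 := lines_bot_inj Pa l1 l1' h h'; subst L1'.
    have [[t ht] _] := lM.2.
    have ht' : top M' t by rewrite -e' e.
    by rewrite (lines_top_inj Pd lM lM' ht ht').
  have E2 := lines_bot_inj Pd lM lM' h h'; subst M'.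
  have [[t ht] _] := l1.2.
  have ht' : top L1' t by rewrite e' -e.
  by rewrite (lines_top_inj Pa l1 l1' ht ht').
have Px := complete_PX gF.
exists (complete F); split => //.
have Pc := pcirc_PX Pa Px.
apply: PX_ext => //; rewrite (lines_pcirc Pa Px).
apply: setP' => L; split.
  move=> [L1 [L2 [l1 [l2 [e ->]]]]].
  move: l2; rewrite (lines_complete gF) => -[K1 [M [k1 [lM [eKM EL2]]]]].
  rewrite EL2 top_mkline in e; rewrite EL2 bot_mkline.
  have [_ [t ht]] := l1.2.
  have ht' : bot K1 t by rewrite -e.
  have E := lines_bot_inj Pa l1 k1 ht ht'; subst K1.
  by rewrite eKM mkline_top_bot.
move=> lM; have [L1 [l1 e]] : pdom a (top L) by apply: sub; exists L.
exists L1, (mkline (bot L1) (bot L)); split => //; split.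
  by rewrite (lines_complete gF); exists L1, L.
by rewrite top_mkline bot_mkline -e mkline_top_bot.
Qed.
End Circ.

Section StarGen.
Variable X : Type.
Variables a b : Defs.partition X.
Local Notation sim := (sim a b).
Local Notation chp := (class_has_point a b).
Local Notation star := (star_rel a b).

Lemma gen_rel_sym u v : gen_rel a b u v -> gen_rel a b v u.
Proof.
case=> [[B [aB [p [q [Bp [Bq [-> ->]]]]]]]|[B [bB [p [q [Bp [Bq [-> ->]]]]]]]].
  by left; exists B; split => //; exists q, p.
by right; exists B; split => //; exists q, p.
Qed.

Lemma sim_refl u : sim u u. Proof. exact: rst_refl. Qed.
Lemma sim_sym u v : sim u v -> sim v u. Proof. exact: rst_sym. Qed.
Lemma sim_trans u v w : sim u v -> sim v w -> sim u w. Proof. exact: rst_trans. Qed.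
Lemma sim_step u v : gen_rel a b u v -> sim u v. Proof. exact: rst_step. Qed.

Lemma sim_inv (Z : pt3 X -> Prop) :
  (forall u v, gen_rel a b u v -> Z u -> Z v) -> forall u v, sim u v -> (Z u <-> Z v).
Proof.
move=> HZ u v; elim => [x y g|x|x y _ [h1 h2]|x y z _ [h1 h2] _ [h3 h4]].
- by split; [apply: HZ|apply: HZ; apply: gen_rel_sym].
- by [].
- by split.
- by split => ?; [apply: h3; apply: h1|apply: h2; apply: h4].
Qed.

Lemma chp_sim u v : sim u v -> chp u -> chp v.
Proof.
move=> s [w [suw H]]; exists w; split => //.
exact: sim_trans (sim_sym s) suw.
Qed.

Lemma star_sim u v : star u v -> sim (outP u) (outP v).
Proof. by case=> [->|[]//]; apply: sim_refl. Qed.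

Lemma star_refl u : star u u. Proof. by left. Qed.

Lemma star_sym u v : star u v -> star v u.
Proof.
case=> [->|[s nc]]; first by left.
right; split; first exact: sim_sym.
by move=> c; apply: nc; apply: chp_sim c; apply: sim_sym.
Qed.

Lemma star_trans u v w : star u v -> star v w -> star u w.
Proof.
case=> [->//|[s1 nc]] [<-|[s2 _]]; first by right.
by right; split => //; apply: sim_trans s1 s2.
Qed.

Lemma star_chp u v : chp (outP u) -> star u v -> v = u.
Proof. by move=> c [->//|[_ nc]]. Qed.

Lemma star_blk_eq u u' : star u u' ->
  [set v | star u v] = [set v | star u' v].
Proof.
move=> s; apply: setP' => v; split => h.
  exact: star_trans (star_sym s) h.
exact: star_trans s h.
Qed.

Hypotheses (Pa : PX a) (Pb : PX b).

Lemma from_top x : ~ chp (x, Top) -> exists y, sim (x, Top) (y, Bot).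
Proof.
move=> nc.
have [B [aB Bx]] := PX_cover (inl x) Pa.
have nB : ~ a [set inl x].
  by move=> h; apply: nc; exists (x, Top); split; [apply: sim_refl|left; exists (inl x)].
have [_ [z Bz]] := PX_block_line Pa aB Bx nB.
have g1 : gen_rel a b (x, Top) (z, Mid).
  by left; exists B; split => //; exists (inl x), (inr z).
have [C [bC Cz]] := PX_cover (inl z) Pb.
have nC : ~ b [set inl z].
  move=> h; apply: nc; exists (z, Mid); split; first exact: sim_step.
  by right; exists (inl z).
have [_ [y Cy]] := PX_block_line Pb bC Cz nC.
have g2 : gen_rel a b (z, Mid) (y, Bot).
  by right; exists C; split => //; exists (inl z), (inr y).
by exists y; apply: sim_trans (sim_step g1) (sim_step g2).
Qed.

Lemma from_bot y : ~ chp (y, Bot) -> exists x, sim (y, Bot) (x, Top).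
Proof.
move=> nc.
have [C [bC Cy]] := PX_cover (inr y) Pb.
have nC : ~ b [set inr y].
  by move=> h; apply: nc; exists (y, Bot); split; [apply: sim_refl|right; exists (inr y)].
have [[z Cz] _] := PX_block_line Pb bC Cy nC.
have g1 : gen_rel a b (y, Bot) (z, Mid).
  by right; exists C; split => //; exists (inr y), (inl z).
have [B [aB Bz]] := PX_cover (inr z) Pa.
have nB : ~ a [set inr z].
  move=> h; apply: nc; exists (z, Mid); split; first exact: sim_step.
  by left; exists (inr z).
have [[x Bx] _] := PX_block_line Pa aB Bz nB.
have g2 : gen_rel a b (z, Mid) (x, Top).
  by left; exists B; split => //; exists (inr z), (inl x).
by exists x; apply: sim_trans (sim_step g1) (sim_step g2).
Qed.

Lemma pstar_PX : PX (pstar a b).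
Proof.
split; first split.
- by move=> B [u ->]; exists u; apply: star_refl.
- by move=> p; exists [set v | star p v]; split; [exists p|apply: star_refl].
- move=> B C p [u ->] [u' ->] h1 h2.
  apply: star_blk_eq; exact: star_trans h1 (star_sym h2).
move=> B [u ->].
have [c|nc] := pselect (chp (outP u)).
  left; exists u; apply: setP' => v; split; first exact: star_chp.
  by move=> /= ->; apply: star_refl.
right; case: u nc => [x|y] /= nc.
  have [y s] := from_top nc.
  by split; [exists x; apply: star_refl|exists y; right].
have [x s] := from_bot nc.
by split; [exists x; right|exists y; apply: star_refl].
Qed.

Lemma pstar_dom : domle (pdom (pstar a b)) (pdom a).
Proof.
move=> A [L [[[u EL] lL] ->]] z Lz.
have Lu : star u (inl z) by move: Lz; rewrite /top EL.
have nc : ~ chp (outP u).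
  move=> c; apply: (line_not_point lL); exists u; rewrite EL.
  apply: setP' => v; split; first exact: star_chp.
  by move=> /= ->; apply: star_refl.
have s := star_sim Lu.
have ncz : ~ chp (z, Top) by move=> c; apply: nc; apply: chp_sim c; apply: sim_sym.
have [B [aB Bz]] := PX_cover (inl z) Pa.
have nB : ~ a [set inl z].
  by move=> h; apply: ncz; exists (z, Top); split; [apply: sim_refl|left; exists (inl z)].
have lB := PX_block_line Pa aB Bz nB.
exists (top B); split; first by exists B.
split => // z' Bz'; rewrite /top EL /=; right; split => //.
apply: sim_trans s (sim_step _).
by left; exists B; split => //; exists (inl z), (inl z').
Qed.
End StarGen.

Section StarConstr.
Variable X : Type.
Variables a d : Defs.partition X.
Hypotheses (Pa : PX a) (Pd : PX d) (dl : domle (pdom d) (pdom a)).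

Let U (M : set (pt X)) : set X :=
  [set y | exists L, lines a L /\ top L `<=` top M /\ bot L y].
Let F : set (set (pt X)) :=
  [set N | exists M, lines d M /\ N = mkline (U M) (bot M)].

Let a_of_top M z : lines d M -> top M z ->
  exists L, lines a L /\ L (inl z) /\ top L `<=` top M.
Proof.
move=> lM Mz; have [A' [[L [lL ->]] [Lz sub]]] := dl (ex_intro _ M (conj lM erefl)) Mz.
by exists L.
Qed.

Let U_ne M : lines d M -> U M !=set0.
Proof.
move=> lM; have [[z Mz] _] := lM.2.
have [L [lL [Lz sub]]] := a_of_top lM Mz.
have [_ [y Ly]] := lL.2; by exists y, L.
Qed.

Let gF : good_fam F.
Proof.
split.
  move=> N [M [lM ->]]; apply: mkline_line; first exact: U_ne.
  exact: lM.2.2.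
move=> N N' p [M [lM ->]] [M' [lM' ->]]; case: p => [y|w] /= h h'.
  have [L [lL [sL Ly]]] := h; have [L' [lL' [sL' L'y]]] := h'.
  have E := lines_bot_inj Pa lL lL' Ly L'y; subst L'.
  have [[t Lt] _] := lL.2.
  by rewrite (lines_top_inj Pd lM lM' (sL t Lt) (sL' t Lt)).
by rewrite (lines_bot_inj Pd lM lM' h h').
Qed.

Let x := complete F.
Let Px : PX x := complete_PX gF.

Let xF N : F N -> x N. Proof. by left. Qed.

Let key u B : d B -> B u -> [set v | star_rel a x u v] = B.
Proof.
move=> dB Bu; have [[p Bp]|lB] := PX_pl Pd dB.
  have EB : B = [set u] by move: Bu; rewrite Bp /= => ->.
  rewrite EB in dB *.
  suff c : class_has_point a x (outP u).
    apply: setP' => v; split; first exact: star_chp.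
    by move=> /= ->; apply: star_refl.
  case: u {Bu EB Bp} dB => [z|w] dB.
    have [B' [aB' B'z]] := PX_cover (inl z) Pa.
    have [aP|naP] := pselect (a [set inl z]).
      by exists (z, Top); split; [apply: sim_refl|left; exists (inl z)].
    have lB' := PX_block_line Pa aB' B'z naP.
    have [_ [y B'y]] := lB'.
    have xy : x [set inl y].
      right; exists (inl y); split => // N [M [lM ->]] /= [L [lL [sL Ly]]].
      have E := lines_bot_inj Pa lL (conj aB' lB') Ly B'y; subst L.
      have Mz : M (inl z) by apply: sL.
      have E := PX_disj Pd lM.1 dB Mz erefl.
      by apply: (line_not_single lM.2 E).
    exists (y, Mid); split; last by right; exists (inl y).
    by apply: sim_step; left; exists B'; split => //; exists (inl z), (inr y).
  have xw : x [set inr w].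
    right; exists (inr w); split => // N [M [lM ->]] /= Mw.
    have E := PX_disj Pd lM.1 dB Mw erefl.
    by apply: (line_not_single lM.2 E).
  by exists (w, Bot); split; [apply: sim_refl|right; exists (inr w)].
have lM : lines d B by [].
set M := B in lM Bu *.
pose Z (w : pt3 X) := match w with
  | (z, Top) => top M z | (y, Mid) => U M y | (t, Bot) => bot M t end.
have aZ : forall L' p, a L' -> L' p -> Z (embA p) -> lines a L' /\ top L' `<=` top M.
  move=> L' [z|y] aL' L'p /= Zp.
    have [L [lL [Lz sL]]] := a_of_top lM Zp.
    by rewrite (PX_disj Pa aL' lL.1 L'p Lz).
  have [L [lL [sL Ly]]] := Zp.
  by rewrite (PX_disj Pa aL' lL.1 L'p Ly).
have aZ2 : forall L p, lines a L -> top L `<=` top M -> L p -> Z (embA p).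
  move=> L [z|y] lL sL Lp /=; first exact: sL.
  by exists L.
have xZ : forall C p, x C -> C p -> Z (embB p) -> C = mkline (U M) (bot M).
  move=> C p xC Cp Zp; have hF : F (mkline (U M) (bot M)) by exists M.
  apply: (PX_disj Px xC (xF hF) Cp).
  by case: p {Cp} Zp.
have xZ2 : forall p, mkline (U M) (bot M) p -> Z (embB p) by case.
have cl : forall u v, gen_rel a x u v -> Z u -> Z v.
  move=> u0 v0 [[B' [aB' [p [q [B'p [B'q [-> ->]]]]]]]|[C [xC [p [q [Cp [Cq [-> ->]]]]]]]] Zu.
    by have [lB' sB'] := aZ B' p aB' B'p Zu; apply: aZ2 lB' sB' B'q.
  by apply: xZ2; rewrite -(xZ C p xC Cp Zu).
have ZoutP : forall v, Z (outP v) <-> M v by case.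
have sZ : forall w, sim a x (outP u) w -> Z w.
  by move=> w s; apply: (sim_inv cl s).1; apply/ZoutP.
have nc : ~ class_has_point a x (outP u).
  move=> [w [s [[p [ap Ew]]|[p [xp Ew]]]]]; subst w.
    have [lp _] := aZ _ p ap erefl (sZ _ s).
    exact: (line_not_single lp.2 erefl).
  have E := xZ _ p xp erefl (sZ _ s).
  have [lF _] := gF.
  exact: (line_not_single (lF _ (ex_intro _ M (conj lM erefl))) (esym E)).
have xM : x (mkline (U M) (bot M)) by apply: xF; exists M.
have mid : forall y y', U M y -> U M y' -> sim a x (y, Mid) (y', Mid).
  by move=> y y' hy hy'; apply: sim_step; right; exists (mkline (U M) (bot M));
     split => //; exists (inl y), (inl y').
have hub : forall v, M v -> exists y, U M y /\ sim a x (outP v) (y, Mid).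
  move=> [z|w] Mv.
    have [L [lL [Lz sL]]] := a_of_top lM Mv.
    have [_ [y Ly]] := lL.2.
    exists y; split; first by exists L.
    by apply: sim_step; left; exists L; split; [exact: lL.1|exists (inl z), (inr y)].
  have [y0 Uy0] := U_ne lM.
  exists y0; split => //.
  by apply: sim_step; right; exists (mkline (U M) (bot M)); split => //; exists (inr w), (inl y0).
apply: setP' => v; split.
  by case=> [<-//|[s _]]; apply/ZoutP/sZ.
move=> Mv; right; split => //.
have [y1 [U1 s1]] := hub u Bu; have [y2 [U2 s2]] := hub v Mv.
exact: sim_trans s1 (sim_trans (mid _ _ U1 U2) (sim_sym s2)).
Qed.

Lemma pstar_constr : exists x, PX x /\ pstar a x = d.
Proof.
exists x; split => //; apply: setP' => B; split.
  move=> [u ->]; have [B' [dB' B'u]] := PX_cover u Pd.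
  by rewrite (key dB' B'u).
move=> dB; have [u Bu] := PX_ne Pd dB.
by exists u; rewrite (key dB Bu).
Qed.
End StarConstr.

Section Flip.
Variable X : Type.
Implicit Types (a b d : Defs.partition X) (B C L : set (pt X)).

Definition sw (p : pt X) : pt X := match p with inl x => inr x | inr x => inl x end.
Definition fl B : set (pt X) := [set p | B (sw p)].
Definition flipP a : Defs.partition X := [set B | a (fl B)].
Definition swl (w : pt3 X) : pt3 X :=
  (w.1, match w.2 with Top => Bot | Mid => Mid | Bot => Top end).

Lemma sw_inv p : sw (sw p) = p. Proof. by case: p. Qed.
Lemma fl_inv B : fl (fl B) = B.
Proof. by apply: setP' => p; rewrite /fl /= sw_inv. Qed.
Lemma flipP_inv a : flipP (flipP a) = a.
Proof. by apply: setP' => B; rewrite /flipP /= fl_inv. Qed.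
Lemma swl_inv w : swl (swl w) = w. Proof. by case: w => ? []. Qed.
Lemma fl_single p : fl [set p] = [set sw p].
Proof. by apply: setP' => q; rewrite /fl /=; split => [<-|->]; rewrite sw_inv. Qed.
Lemma top_fl B : top (fl B) = bot B. Proof. by []. Qed.
Lemma bot_fl B : bot (fl B) = top B. Proof. by []. Qed.
Lemma fl_mkline (A D : set X) : fl (mkline A D) = mkline D A.
Proof. by apply: setP' => -[]. Qed.
Lemma is_line_fl B : is_line (fl B) <-> is_line B.
Proof. by split => -[h1 h2]; split. Qed.
Lemma lines_flip a L : lines (flipP a) L <-> lines a (fl L).
Proof.
split => -[h1 h2]; split => //; first exact: (is_line_fl L).2.
exact: (is_line_fl L).1.
Qed.

Lemma pdom_flip a : pdom (flipP a) = pran a.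
Proof.
apply: setP' => A; split.
  by move=> [L [/lines_flip lL ->]]; exists (fl L).
move=> [L [lL ->]]; exists (fl L); split; last by [].
by apply/lines_flip; rewrite fl_inv.
Qed.

Lemma pran_flip a : pran (flipP a) = pdom a.
Proof. by rewrite -{2}(flipP_inv a) pdom_flip. Qed.

Lemma PX_flip a : PX a -> PX (flipP a).
Proof.
move=> Pa; split; first split.
- by move=> B /(PX_ne Pa) [p hp]; exists (sw p).
- move=> p; have [C [aC Cp]] := PX_cover (sw p) Pa.
  by exists (fl C); rewrite /flipP /= fl_inv.
- move=> B C p aB aC Bp Cp.
  have E : fl B = fl C.
    by apply: (PX_disj (p := sw p) Pa aB aC); rewrite /fl /= sw_inv.
  by rewrite -(fl_inv B) E fl_inv.
move=> B aB; have [[q E]|l] := PX_pl Pa aB.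
  by left; exists (sw q); rewrite -(fl_inv B) E fl_single.
by right; apply/is_line_fl.
Qed.

Lemma flipP_inj a b : flipP a = flipP b -> a = b.
Proof. by move=> E; rewrite -(flipP_inv a) E flipP_inv. Qed.

Lemma circ_flip a b L : circ_lines (flipP a) (flipP b) L <-> circ_lines b a (fl L).
Proof.
split.
  move=> [L1 [L2 [/lines_flip l1 [/lines_flip l2 [e ->]]]]].
  exists (fl L2), (fl L1); split => //; split => //; split.
    by rewrite bot_fl top_fl.
  by rewrite fl_mkline.
move=> [K1 [K2 [l1 [l2 [e E]]]]].
exists (fl K2), (fl K1); split; first by apply/lines_flip; rewrite fl_inv.
split; first by apply/lines_flip; rewrite fl_inv.
split; first by rewrite top_fl bot_fl.
by rewrite -(fl_inv L) E fl_mkline.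
Qed.

Lemma pcirc_flip a b : PX a -> PX b ->
  pcirc (flipP a) (flipP b) = flipP (pcirc b a).
Proof.
move=> Pa Pb; have Pfa := PX_flip Pa; have Pfb := PX_flip Pb.
apply: PX_ext; [exact: pcirc_PX|exact/PX_flip/pcirc_PX|].
apply: setP' => L; rewrite (lines_pcirc Pfa Pfb) lines_flip (lines_pcirc Pb Pa).
exact: circ_flip.
Qed.

Lemma swl_embA p : swl (embA p) = embB (sw p). Proof. by case: p. Qed.
Lemma swl_embB p : swl (embB p) = embA (sw p). Proof. by case: p. Qed.
Lemma swl_outP p : swl (outP p) = outP (sw p). Proof. by case: p. Qed.

Lemma gen_rel_flip a b u v : gen_rel (flipP a) (flipP b) u v -> gen_rel b a (swl u) (swl v).
Proof.
case=> [[B [aB [p [q [Bp [Bq [-> ->]]]]]]]|[B [bB [p [q [Bp [Bq [-> ->]]]]]]]].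
  right; exists (fl B); split => //; exists (sw p), (sw q).
  by rewrite /fl /= !sw_inv !swl_embA.
left; exists (fl B); split => //; exists (sw p), (sw q).
by rewrite /fl /= !sw_inv !swl_embB.
Qed.

Lemma gen_rel_unflip a b u v : gen_rel b a u v -> gen_rel (flipP a) (flipP b) (swl u) (swl v).
Proof.
case=> [[B [bB [p [q [Bp [Bq [-> ->]]]]]]]|[B [aB [p [q [Bp [Bq [-> ->]]]]]]]].
  right; exists (fl B); split; first by rewrite /flipP /= fl_inv.
  by exists (sw p), (sw q); rewrite /fl /= !sw_inv !swl_embA.
left; exists (fl B); split; first by rewrite /flipP /= fl_inv.
by exists (sw p), (sw q); rewrite /fl /= !sw_inv !swl_embB.
Qed.

Lemma crst_map T (R R' : relation T) (f : T -> T) :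
  (forall u v, R u v -> R' (f u) (f v)) ->
  forall u v, clos_refl_sym_trans T R u v -> clos_refl_sym_trans T R' (f u) (f v).
Proof.
move=> H u v; elim => [x y g|x|x y _ h|x y z _ h1 _ h2].
- exact/rst_step/H.
- exact: rst_refl.
- exact: rst_sym.
- exact: rst_trans h1 h2.
Qed.

Lemma sim_flip a b u v : sim (flipP a) (flipP b) u v <-> sim b a (swl u) (swl v).
Proof.
split; first by move=> h; exact: (@crst_map _ _ _ swl (@gen_rel_flip a b) u v h).
move=> h; have := (@crst_map _ _ _ swl (@gen_rel_unflip a b) _ _ h).
by rewrite !swl_inv.
Qed.

Lemma chp_flip a b u : class_has_point (flipP a) (flipP b) u <-> class_has_point b a (swl u).
Proof.
split.
  move=> [w [/sim_flip s [[p [ap Ew]]|[p [bp Ew]]]]]; subst w.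
    exists (swl (embA p)); split => //; right; exists (sw p); split; last by rewrite swl_embA.
    by move: ap; rewrite /flipP /= fl_single.
  exists (swl (embB p)); split => //; left; exists (sw p); split; last by rewrite swl_embB.
  by move: bp; rewrite /flipP /= fl_single.
move=> [w [s [[p [bp Ew]]|[p [ap Ew]]]]]; subst w.
  exists (swl (embA p)); split; first by apply/sim_flip; rewrite swl_inv.
  right; exists (sw p); split; last by rewrite swl_embA.
  by rewrite /flipP /= fl_single sw_inv.
exists (swl (embB p)); split; first by apply/sim_flip; rewrite swl_inv.
left; exists (sw p); split; last by rewrite swl_embB.
by rewrite /flipP /= fl_single sw_inv.
Qed.

Lemma star_flip a b u v : star_rel (flipP a) (flipP b) u v <-> star_rel b a (sw u) (sw v).
Proof.
rewrite /star_rel sim_flip chp_flip !swl_outP; split.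
  by case=> [->|h]; [left|right].
case=> [E|h]; [left|right] => //.
by rewrite -(sw_inv u) E sw_inv.
Qed.

Lemma pstar_flip a b : pstar (flipP a) (flipP b) = flipP (pstar b a).
Proof.
apply: setP' => B; rewrite /flipP /=; split.
  move=> [u ->]; exists (sw u); apply: setP' => v; rewrite /fl /=.
  by rewrite star_flip sw_inv.
move=> [u E]; exists (sw u); rewrite -(fl_inv B) E; apply: setP' => v.
by rewrite /fl /= star_flip sw_inv.
Qed.
End Flip.

Lemma bij_of_eq T U (A : set T) (B : set U) (u0 : U) : A #= B ->
  exists f : T -> U, (forall x, A x -> B (f x)) /\ {in A &, injective f} /\
    (forall y, B y -> exists x, A x /\ f x = y).
Proof.
move=> /card_bijP [g [h gh hg]].
pose f x := match pselect (A x) with left hx => val (g (SigSub (mem_set hx))) | right _ => u0 end.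
have fE x (hx : A x) : f x = val (g (SigSub (mem_set hx))).
  rewrite /f; case: pselect => // hx'; congr (val (g _)); exact: val_inj.
exists f; split; [|split].
- by move=> x hx; rewrite fE; exact: set_valP.
- move=> x y; rewrite !inE => hx hy; rewrite !fE => /val_inj /(congr1 h).
  by rewrite !gh => /(congr1 val).
- move=> y hy; exists (val (h (SigSub (mem_set hy)))); split; first exact: set_valP.
  have hv := set_valP (h (SigSub (mem_set hy))).
  rewrite (fE _ hv).
  have -> : SigSub (mem_set hv) = h (SigSub (mem_set hy)) by apply: val_inj.
  by rewrite hg.
Qed.

Section Op.
Variable X : Type.
Variable c : bool.
Implicit Types (a b d e : Defs.partition X).
Local Notation op := (@PIop X c).

Lemma op_PX a b : PX a -> PX b -> PX (op a b).
Proof. by case: c => /= Pa Pb; [apply: pcirc_PX|apply: pstar_PX]. Qed.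

Lemma op_flip a b : PX a -> PX b -> op (flipP a) (flipP b) = flipP (op b a).
Proof. by case: c => /= Pa Pb; [apply: pcirc_flip|apply: pstar_flip]. Qed.

Lemma op_dom a b : PX a -> PX b -> dle c (pdom (op a b)) (pdom a).
Proof. by case: c => /= Pa Pb; [apply: pcirc_dom|apply: pstar_dom]. Qed.

Lemma op_constr a d : PX a -> PX d -> dle c (pdom d) (pdom a) ->
  exists x, PX x /\ op a x = d.
Proof. by case: c => /= Pa Pd H; [apply: pcirc_constr|apply: pstar_constr]. Qed.

Lemma op_ran a b : PX a -> PX b -> dle c (pran (op b a)) (pran a).
Proof.
move=> Pa Pb; rewrite -pdom_flip -op_flip // -(pdom_flip a).
by apply: op_dom; apply: PX_flip.
Qed.

Lemma op_constrL a d : PX a -> PX d -> dle c (pran d) (pran a) ->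
  exists x, PX x /\ op x a = d.
Proof.
move=> Pa Pd H.
have [x' [Px' E]] : exists x', PX x' /\ op (flipP a) x' = flipP d.
  by apply: op_constr; [apply: PX_flip|apply: PX_flip|rewrite !pdom_flip].
exists (flipP x'); split; first exact: PX_flip.
apply: flipP_inj; rewrite -op_flip //; last exact: PX_flip.
by rewrite flipP_inv.
Qed.

Lemma rprinc_char a : PX a ->
  rprinc (@PX X) op a = [set d | PX d /\ dle c (pdom d) (pdom a)].
Proof.
move=> Pa; apply: setP' => d; split.
  case=> [->|[x [Px ->]]]; first by split => //; apply: dle_refl.
  by split; [apply: op_PX|apply: op_dom].
move=> [Pd H]; right; have [x [Px E]] := op_constr Pa Pd H.
by exists x.
Qed.

Lemma lprinc_char a : PX a ->
  lprinc (@PX X) op a = [set d | PX d /\ dle c (pran d) (pran a)].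
Proof.
move=> Pa; apply: setP' => d; split.
  case=> [->|[x [Px ->]]]; first by split => //; apply: dle_refl.
  by split; [apply: op_PX|apply: op_ran].
move=> [Pd H]; right; have [x [Px E]] := op_constrL Pa Pd H.
by exists x.
Qed.

Lemma mid_constr a d (f : set (pt X) -> set (pt X)) : PX a -> PX d ->
  (forall M, lines d M -> lines a (f M)) -> {in lines d &, injective f} ->
  exists e, PX e /\ pdom e = pdom d /\
    pran e = [set B | exists M, lines d M /\ B = bot (f M)].
Proof.
move=> Pa Pd fl finj.
pose G := [set N | exists M, lines d M /\ N = mkline (top M) (bot (f M))].
have gG : good_fam G.
  split.
    move=> N [M [lM ->]]; apply: mkline_line; first exact: lM.2.1.
    exact: (fl M lM).2.2.
  move=> N N' p [M [lM ->]] [M' [lM' ->]]; case: p => [z|w] /= h h'.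
    by rewrite (lines_top_inj Pd lM lM' h h').
  have E := lines_bot_inj Pa (fl M lM) (fl M' lM') h h'.
  by rewrite (finj M M' (mem_set lM) (mem_set lM') E).
exists (complete G); split; first exact: complete_PX.
split; apply: setP' => A; rewrite /pdom /pran (lines_complete gG); split.
- by move=> [N [[M [lM ->]] ->]]; exists M.
- by move=> [M [lM ->]]; exists (mkline (top M) (bot (f M))); split => //; exists M.
- by move=> [N [[M [lM ->]] ->]]; exists M.
- by move=> [M [lM ->]]; exists (mkline (top M) (bot (f M))); split => //; exists M.
Qed.

Lemma rank_op_l a x : PX a -> PX x -> lines (op a x) #<= lines a.
Proof. by move=> Pa Px; apply: (dle_lines_dom (op_PX Pa Px) Pa (op_dom Pa Px)). Qed.

Lemma rank_op_r a x : PX a -> PX x -> lines (op x a) #<= lines a.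
Proof. by move=> Pa Px; apply: (dle_lines_ran (op_PX Px Pa) Pa (op_ran Pa Px)). Qed.

Lemma jprinc_char a : PX a ->
  jprinc (@PX X) op a = [set d | PX d /\ lines d #<= lines a].
Proof.
move=> Pa; apply: setP' => d; split.
  case=> [->|[[x [Px ->]]|[[x [Px ->]]|[x [y [Px [Py ->]]]]]]].
  - by split.
  - by split; [apply: op_PX|apply: rank_op_l].
  - by split; [apply: op_PX|apply: rank_op_r].
  - split; first by apply: op_PX => //; apply: op_PX.
    apply: card_le_trans (rank_op_l (op_PX Px Pa) Py) _.
    exact: rank_op_r.
move=> [Pd le]; right; right; right.
have [f [fl finj]] := inj_of_le set0 le.
have [e [Pe [de re]]] := mid_constr Pa Pd fl finj.
have [x [Px Ex]] : exists x, PX x /\ op x a = e.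
  apply: op_constrL => //; apply: subset_dle; rewrite re.
  by move=> B [M [lM ->]]; exists (f M); split => //; apply: fl.
have [y [Py Ey]] : exists y, PX y /\ op e y = d.
  by apply: op_constr => //; rewrite de; apply: dle_refl.
by exists x, y; rewrite Ex Ey.
Qed.
End Op.

Lemma pfam_le_T T (P : set (set T)) : pfam P -> P #<= [set: T].
Proof.
move=> [Pn Pd].
have [[t0 _]|nT] := pselect (exists t : T, True); last first.
  have -> : P = set0.
    apply: setP' => A; split => // PA; have [z _] := Pn A PA.
    by apply: nT; exists z.
  exact: card_ge0.
have [g Hg] := choice (P := fun A z => P A -> A z) (fun A =>
  match pselect (P A) with
  | left PA => let: ex_intro z Az := Pn A PA in ex_intro _ z (fun _ => Az)
  | right nPA => ex_intro _ t0 (fun h => False_ind _ (nPA h)) end).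
apply: (@le_of_inj _ _ _ _ g) => // A1 A2; rewrite !inE => P1 P2 e.
have h2 : A2 (g A1) by rewrite e; exact: Hg _ P2.
exact: Pd P1 P2 (Hg _ P1) h2.
Qed.

Lemma lines_le_T X (a : Defs.partition X) : PX a -> lines a #<= [set: X].
Proof.
move=> Pa; rewrite (card_le_eql (card_lines_dom Pa)).
exact: pfam_le_T (pfam_pdom Pa).
Qed.

Lemma cantor T : ~ ([set: set T] #<= [set: T]).
Proof.
move=> le.
have [[t0 _]|nT] := pselect (exists t : T, True); last first.
  have : [set: T] = set0 by apply: setP' => t; split => // _; apply: nT; exists t.
  move=> E; rewrite E in le; move/card_le0P: le => E2.
  by have : (@setT (set T)) set0 by []; rewrite E2.
have [f [_ finj]] := inj_of_le t0 le.
pose D := [set x | exists A, f A = x /\ ~ A x].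
have [h|h] := pselect (D (f D)).
  have [A [e nA]] := h.
  have E : A = D by apply: finj; rewrite ?inE.
  by apply: nA; rewrite E.
by apply: (h); exists D; split.
Qed.

Theorem mainTheorem2 (X : Type) (c : bool) :
  let S := @PX X in
  let op := PIop c in
  (forall a b, S a -> S b -> (GreenR S op a b <-> pdom a = pdom b)) /\
  (forall a b, S a -> S b -> (GreenL S op a b <-> pran a = pran b)) /\
  (forall a b, S a -> S b ->
     (GreenD S op a b <-> GreenJ S op a b) /\
     (GreenJ S op a b <-> lines a #= lines b)) /\
  (forall I, is_ideal S op I ->
     exists (T : Type) (K : set T),
       card_le_succ X K /\ I = [set a | S a /\ rank_lt a K]).
Proof.
move=> S op; rewrite /S /op.
have R_iff : forall a b, PX a -> PX b ->
    (GreenR (@PX X) (PIop c) a b <-> pdom a = pdom b).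
  move=> a b Pa Pb; rewrite /GreenR (rprinc_char c Pa) (rprinc_char c Pb); split.
    move=> E.
    have ha : [set d | PX d /\ dle c (pdom d) (pdom b)] a.
      by rewrite -E; split => //; apply: dle_refl.
    have hb : [set d | PX d /\ dle c (pdom d) (pdom a)] b.
      by rewrite E; split => //; apply: dle_refl.
    exact: dle_antisym (pfam_pdom Pa) (pfam_pdom Pb) ha.2 hb.2.
  by move=> ->.
have L_iff : forall a b, PX a -> PX b ->
    (GreenL (@PX X) (PIop c) a b <-> pran a = pran b).
  move=> a b Pa Pb; rewrite /GreenL (lprinc_char c Pa) (lprinc_char c Pb); split.
    move=> E.
    have ha : [set d | PX d /\ dle c (pran d) (pran b)] a.
      by rewrite -E; split => //; apply: dle_refl.
    have hb : [set d | PX d /\ dle c (pran d) (pran a)] b.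
      by rewrite E; split => //; apply: dle_refl.
    exact: dle_antisym (pfam_pran Pa) (pfam_pran Pb) ha.2 hb.2.
  by move=> ->.
have J_iff : forall a b, PX a -> PX b ->
    (GreenJ (@PX X) (PIop c) a b <-> lines a #= lines b).
  move=> a b Pa Pb; rewrite /GreenJ (jprinc_char c Pa) (jprinc_char c Pb); split.
    move=> E.
    have ha : [set d | PX d /\ lines d #<= lines b] a by rewrite -E; split.
    have hb : [set d | PX d /\ lines d #<= lines a] b by rewrite E; split.
    by rewrite card_eq_le; apply/andP; split; [exact: ha.2|exact: hb.2].
  move=> E; apply: setP' => d; split => -[Pd h]; split => //.
    by rewrite -(card_le_eqr E).
  by rewrite (card_le_eqr E).
have D_iff : forall a b, PX a -> PX b ->
    (GreenD (@PX X) (PIop c) a b <-> lines a #= lines b).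
  move=> a b Pa Pb; split.
    move=> [e [Pe [Rae Leb]]].
    have /(R_iff _ _ Pa Pe) de := Rae; have /(L_iff _ _ Pe Pb) re := Leb.
    apply: card_eq_trans (card_lines_dom Pa) _; rewrite de.
    apply: card_eq_trans (card_esym (card_lines_dom Pe)) _.
    apply: card_eq_trans (card_lines_ran Pe) _; rewrite re.
    exact: card_esym (card_lines_ran Pb).
  move=> E; have [f [fl [finj fsurj]]] := bij_of_eq set0 E.
  have [e [Pe [de re]]] := mid_constr Pb Pa fl finj.
  exists e; split => //; split.
    by apply/(R_iff _ _ Pa Pe).
  apply/(L_iff _ _ Pe Pb); rewrite re; apply: setP' => B; split.
    by move=> [M [lM ->]]; exists (f M); split => //; apply: fl.
  move=> [L [lL ->]]; have [M [lM <-]] := fsurj L lL.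
  by exists M.
split; first exact: R_iff.
split; first exact: L_iff.
split.
  move=> a b Pa Pb; rewrite (J_iff _ _ Pa Pb) (D_iff _ _ Pa Pb); split => //.
move=> I [IS Icl].
have Icl2 : forall a d, I a -> PX d -> lines d #<= lines a -> I d.
  move=> a d Ia Pd le.
  have : jprinc (@PX X) (PIop c) a d by rewrite (jprinc_char c (IS _ Ia)).
  case=> [->//|[[x [Px ->]]|[[x [Px ->]]|[x [y [Px [Py ->]]]]]]].
  - exact: (Icl _ _ Ia Px).1.
  - exact: (Icl _ _ Ia Px).2.
  - exact: (Icl _ _ (Icl _ _ Ia Px).2 Py).1.
have [[b0 [Pb0 nIb0]]|allI] := pselect (exists b, PX b /\ ~ I b).
  pose F := [set K | exists b, PX b /\ ~ I b /\ K = lines b].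
  have [K [[b [Pb [nIb EK]]] Kmin]] := @card_min _ F (ex_intro _ (lines b0) (ex_intro _ b0 (conj Pb0 (conj nIb0 erefl)))).
  exists (set (pt X)), K; split.
    move=> A AK AleK _; apply: card_le_trans AleK _.
    by rewrite EK; apply: lines_le_T.
  apply: setP' => a; split.
    move=> Ia; split; first exact: IS.
    have nle : ~ (K #<= lines a).
      by move=> le; apply: nIb; apply: (Icl2 a) => //; rewrite -EK.
    apply/andP; split; last exact/negP.
    by have [//|] := card_total (lines a) K.
  move=> [Pa /andP [le /negP nle]].
  apply: (@contra_notP (I a) (K #<= lines a)) => // nIa; apply: (Kmin (lines a)); exists a; split => //.
have [K [FK Kmin]] := @card_min _ [set A : set (set X) | ~ (A #<= [set: X])]
  (ex_intro _ [set: set X] (@cantor X)).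
exists (set X), K; split.
  move=> A AK AleK /negP nKA; apply: (@contra_notP (A #<= [set: X]) (K #<= A)) => // nA.
  exact: (Kmin A nA).
apply: setP' => a; split.
  move=> Ia; split; first exact: IS.
  have la := lines_le_T (IS _ Ia).
  apply/andP; split.
    have [XK|KX] := card_total [set: X] K; first exact: card_le_trans la XK.
    by exfalso; apply: FK.
  by apply/negP => KA; apply: FK; apply: card_le_trans KA la.
move=> [Pa _]; apply: (@contra_notP (I a) (exists b, PX b /\ ~ I b)) => // nIa.
by exists a; split.
Qed.
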